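(* Let $P, Q \subseteq \mathbb{R}^d$ be polytopes such that $L_P(s) = L_Q(s)$ for all real $s \ge 0$. Then $L_{\operatorname{ppyr} P}(s) = L_{\operatorname{ppyr} Q}(s)$ for all real $s \ge 0$.
   Context: For a polytope $P \subseteq \mathbb{R}^d$ and real $s \ge 0$, $L_P(s) = \#(sP \cap \mathbb{Z}^d)$, where $sP = \{sx : x \in P\}$ (so $0P=\{0\}$ and $L_P(0)=1$). The pseudopyramid of $P$ is $\operatorname{ppyr}(P) = \operatorname{conv}(P \cup \{0\}) = \bigcup_{0 \le \lambda \le 1} \lambda P$. *)

(* Defs.v *)
From Stdlib Require Import Reals List ZArith.
From Stdlib Require Fin.
Import ListNotations.
Open Scope R_scope.

Definition pt (d : nat) := Fin.t d -> R.

Definition Rsum (l : list R) : R := fold_right Rplus 0 l.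

Definition in_conv {d : nat} (V : list (pt d)) (x : pt d) : Prop :=
  exists w : list R,
    length w = length V /\
    Forall (fun a => 0 <= a) w /\
    Rsum w = 1 /\
    forall i : Fin.t d,
      x i = Rsum (map (fun p => fst p * snd p i) (combine w V)).

Definition is_polytope {d : nat} (P : pt d -> Prop) : Prop :=
  exists V : list (pt d), V <> [] /\ forall x, P x <-> in_conv V x.

(* Dilation sP = { s x : x in P }, with the convention 0P = {0}. *)
Definition dil {d : nat} (s : R) (P : pt d -> Prop) (x : pt d) : Prop :=
  (s = 0 /\ forall i, x i = 0) \/
  (s <> 0 /\ exists y, P y /\ forall i, x i = s * y i).

Definition ppyr {d : nat} (P : pt d -> Prop) (x : pt d) : Prop :=
  exists lam, 0 <= lam <= 1 /\ dil lam P x.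

(* Lattice points of Z^d, encoded as integer lists of length d. *)
Definition embed (d : nat) (z : list Z) : pt d :=
  fun i => IZR (nth (proj1_sig (Fin.to_nat i)) z 0%Z).

Definition is_lattice_pt_of {d : nat} (S : pt d -> Prop) (z : list Z) : Prop :=
  length z = d /\ S (embed d z).

Definition lattice_count {d : nat} (S : pt d -> Prop) (n : nat) : Prop :=
  exists l : list (list Z),
    NoDup l /\ (forall z, In z l <-> is_lattice_pt_of S z) /\ length l = n.

Definition Lp {d : nat} (P : pt d -> Prop) (s : R) (n : nat) : Prop :=
  lattice_count (dil s P) n.

(* Main.v *)
Require Import Defs.
From Stdlib Require Import Reals List ZArith Lra Lia ClassicalEpsilon Classical.
From Stdlib Require Fin.
Import ListNotations.
Open Scope R_scope.

Definition ind (p : Prop) : Z := if excluded_middle_informative p then 1%Z else 0%Z.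
Definition decb (p : Prop) : bool := if excluded_middle_informative p then true else false.

Lemma ind_T (p : Prop) : p -> ind p = 1%Z.
Proof. intro h; unfold ind; destruct (excluded_middle_informative p); tauto. Qed.
Lemma ind_F (p : Prop) : ~ p -> ind p = 0%Z.
Proof. intro h; unfold ind; destruct (excluded_middle_informative p); tauto. Qed.
Lemma ind_iff (p q : Prop) : (p <-> q) -> ind p = ind q.
Proof. intro h; destruct (classic p). rewrite !ind_T; tauto. rewrite !ind_F; tauto. Qed.

Definition zs {A} (l : list A) (f : A -> Z) : Z :=
  fold_right (fun a acc => (f a + acc)%Z) 0%Z l.

Lemma zs_ext {A} (l : list A) f g : (forall a, In a l -> f a = g a) -> zs l f = zs l g.
Proof. induction l; simpl; intros; auto. rewrite H by auto. rewrite IHl; auto. Qed.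
Lemma zs_plus {A} (l : list A) f g : zs l (fun a => (f a + g a)%Z) = (zs l f + zs l g)%Z.
Proof. induction l; simpl; auto. rewrite IHl; lia. Qed.
Lemma zs_minus {A} (l : list A) f g : zs l (fun a => (f a - g a)%Z) = (zs l f - zs l g)%Z.
Proof. induction l; simpl; auto. rewrite IHl; lia. Qed.
Lemma zs_zero {A} (l : list A) f : (forall a, In a l -> f a = 0%Z) -> zs l f = 0%Z.
Proof. induction l; simpl; intros; auto. rewrite H, IHl; auto. Qed.
Lemma zs_swap {A B} (l1 : list A) (l2 : list B) F :
  zs l1 (fun a => zs l2 (fun b => F a b)) = zs l2 (fun b => zs l1 (fun a => F a b)).
Proof.
  induction l1; simpl. symmetry; apply zs_zero; auto.
  rewrite IHl1. rewrite <- zs_plus. reflexivity.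
Qed.
Lemma zs_ind_eq (E : list R) a : NoDup E -> In a E -> zs E (fun e => ind (e = a)) = 1%Z.
Proof.
  induction 1; simpl; intros Hi. contradiction.
  destruct Hi as [<-|Hi].
  rewrite ind_T by auto. rewrite zs_zero. lia. intros b Hb; apply ind_F; intro; subst; tauto.
  rewrite ind_F. rewrite IHNoDup; auto. intro; subst; tauto.
Qed.
Lemma length_filter_zs {A} (l : list A) (S : A -> Prop) :
  Z.of_nat (length (filter (fun a => decb (S a)) l)) = zs l (fun a => ind (S a)).
Proof.
  induction l; simpl; auto. rewrite <- IHl. unfold decb at 1, ind at 1.
  destruct (excluded_middle_informative (S a)); cbn [length]; lia.
Qed.
Lemma zs_nonneg_ind {A} (l : list A) (S : A -> Prop) : (0 <= zs l (fun a => ind (S a)))%Z.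
Proof. rewrite <- length_filter_zs; lia. Qed.

Lemma exists_small {A} (l : list A) (C : A -> R -> Prop) :
  (forall a, In a l -> exists e, 0 < e /\ forall t, 0 < t <= e -> C a t) ->
  exists e, 0 < e /\ forall a, In a l -> forall t, 0 < t <= e -> C a t.
Proof.
  induction l; intros H. exists 1; split; [lra| intros; contradiction].
  destruct (H a (or_introl eq_refl)) as [e1 [He1 H1]].
  destruct IHl as [e2 [He2 H2]]. intros; apply H; simpl; auto.
  exists (Rmin e1 e2); split. apply Rmin_pos; auto.
  intros b [<-|Hb] t Ht; [apply H1|apply H2; auto];
  pose proof (Rmin_l e1 e2); pose proof (Rmin_r e1 e2); lra.
Qed.

Lemma approx_eq (a b : R) : (forall e, 0 < e -> Rabs (a - b) < e) -> a = b.
Proof.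
  intro H. destruct (Req_dec_T a b) as [|n]; auto. exfalso.
  assert (0 < Rabs (a - b)) by (apply Rabs_pos_lt; lra).
  specialize (H _ H0). lra.
Qed.
Definition comb {d} (w : list R) (V : list (pt d)) (i : Fin.t d) : R :=
  Rsum (map (fun p => fst p * snd p i) (combine w V)).

Lemma comb_cons {d} a w v (V : list (pt d)) i : comb (a :: w) (v :: V) i = a * v i + comb w V i.
Proof. reflexivity. Qed.
Lemma comb_nilr {d} w i : comb w (@nil (pt d)) i = 0.
Proof. destruct w; reflexivity. Qed.

Lemma Rsum_nonneg w : Forall (fun a => 0 <= a) w -> 0 <= Rsum w.
Proof. induction 1; simpl; lra. Qed.
Lemma Rsum_scale c w : Rsum (map (Rmult c) w) = c * Rsum w.
Proof. induction w; simpl; [ring|rewrite IHw; ring]. Qed.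
Lemma comb_scale {d} c w (V : list (pt d)) i : comb (map (Rmult c) w) V i = c * comb w V i.
Proof.
  revert V; induction w; intros V; destruct V; try (simpl; unfold comb; simpl; ring).
  simpl map. rewrite !comb_cons, IHw. ring.
Qed.
Lemma comb_zero_sum {d} w (V : list (pt d)) i :
  Forall (fun a => 0 <= a) w -> Rsum w = 0 -> comb w V i = 0.
Proof.
  intros H; revert V; induction H; intros V Hs; destruct V; try (unfold comb; simpl; ring).
  simpl in Hs. pose proof (Rsum_nonneg _ H0).
  rewrite comb_cons, IHForall by lra. replace x with 0 by lra. ring.
Qed.
Lemma comb_repeat0 {d} n (V : list (pt d)) i : comb (repeat 0 n) V i = 0.
Proof.
  revert V; induction n; intros V; destruct V; try (unfold comb; simpl; ring).
  simpl repeat. rewrite comb_cons, IHn. ring.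
Qed.
Lemma comb_bound {d} C w (V : list (pt d)) i :
  0 <= C -> (forall v, In v V -> forall i, Rabs (v i) <= C) ->
  Forall (fun a => 0 <= a) w -> Rabs (comb w V i) <= C * Rsum w.
Proof.
  intros HC HV H; revert V HV; induction H; intros V HV; destruct V;
    try (unfold comb; simpl; rewrite Rabs_R0; try lra).
  - pose proof (Rsum_nonneg _ H0). nra.
  - rewrite comb_cons. simpl Rsum.
    assert (h1 := IHForall V (fun v Hv => HV v (or_intror Hv))).
    assert (h2 := HV p (or_introl eq_refl) i).
    pose proof (Rabs_triang (x * p i) (comb l V i)).
    rewrite Rabs_mult, (Rabs_right x) in H1 by lra. nra.
Qed.

Definition mixw (a b : R) (w1 w2 : list R) := map (fun p => a * fst p + b * snd p) (combine w1 w2).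
Lemma mixw_length a b w1 w2 : length w1 = length w2 -> length (mixw a b w1 w2) = length w1.
Proof. intro h; unfold mixw; rewrite length_map, length_combine, h; lia. Qed.
Lemma Rsum_mix a b w1 w2 : length w1 = length w2 -> Rsum (mixw a b w1 w2) = a * Rsum w1 + b * Rsum w2.
Proof.
  revert w2; induction w1; intros w2 h; destruct w2; simpl in *; try lia; try ring.
  unfold mixw in *; simpl. rewrite IHw1 by lia. ring.
Qed.
Lemma comb_mix {d} a b w1 w2 (V : list (pt d)) i : length w1 = length w2 ->
  comb (mixw a b w1 w2) V i = a * comb w1 V i + b * comb w2 V i.
Proof.
  revert w2 V; induction w1; intros w2 V h; destruct w2; simpl in *; try lia;
    destruct V; try (unfold comb; simpl; ring).
  unfold mixw in *; simpl map. rewrite !comb_cons. rewrite IHw1 by lia. simpl. ring.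
Qed.
Lemma mix_nonneg a b w1 w2 : 0 <= a -> 0 <= b -> Forall (fun a => 0 <= a) w1 ->
  Forall (fun a => 0 <= a) w2 -> Forall (fun a => 0 <= a) (mixw a b w1 w2).
Proof.
  intros ha hb h1; revert w2; induction h1; intros w2 h2; destruct h2; unfold mixw; simpl; constructor; auto.
  simpl. nra. apply IHh1; auto.
Qed.

Lemma conv_convex {d} (V : list (pt d)) y1 y2 a y : in_conv V y1 -> in_conv V y2 -> 0 <= a <= 1 ->
  (forall i, y i = a * y1 i + (1 - a) * y2 i) -> in_conv V y.
Proof.
  intros [w1 [l1 [n1 [s1 e1]]]] [w2 [l2 [n2 [s2 e2]]]] ha hy.
  exists (mixw a (1-a) w1 w2). split; [rewrite mixw_length; lia|].
  split; [apply mix_nonneg; auto; lra|].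
  split; [rewrite Rsum_mix by lia; rewrite s1, s2; ring|].
  intro i. change (y i = comb (mixw a (1 - a) w1 w2) V i). rewrite comb_mix by lia.
  rewrite hy, e1, e2. reflexivity.
Qed.

Lemma conv_ext {d} (V : list (pt d)) x y : (forall i, x i = y i) -> in_conv V x -> in_conv V y.
Proof. intros h [w [a [b [c e]]]]. exists w; repeat split; auto. intro i; rewrite <- h; auto. Qed.

Lemma fin_bound d (f : Fin.t d -> R) : exists B, 0 <= B /\ forall i, Rabs (f i) <= B.
Proof.
  induction d. exists 0; split; [lra| intro i; apply (Fin.case0 (fun _ => _) i)].
  destruct (IHd (fun j => f (Fin.FS j))) as [B [HB H]].
  exists (Rmax B (Rabs (f Fin.F1))); split. pose proof (Rmax_l B (Rabs (f Fin.F1))); lra.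
  intro i. apply (Fin.caseS' i (fun i => Rabs (f i) <= Rmax B (Rabs (f Fin.F1)))).
  apply Rmax_r. intro j. pose proof (H j). pose proof (Rmax_l B (Rabs (f Fin.F1))); simpl in *; lra.
Qed.

Lemma verts_bound {d} (V : list (pt d)) : exists C, 0 <= C /\ forall v, In v V -> forall i, Rabs (v i) <= C.
Proof.
  induction V. exists 0; split; [lra| intros; contradiction].
  destruct IHV as [C [HC H]]. destruct (fin_bound d a) as [B [HB Ha]].
  exists (Rmax C B); split. pose proof (Rmax_l C B); lra.
  intros v [<-|Hv] i. pose proof (Ha i); pose proof (Rmax_r C B); lra.
  pose proof (H v Hv i); pose proof (Rmax_l C B); lra.
Qed.

Lemma conv_bound {d} (V : list (pt d)) : exists B, 0 < B /\ forall y, in_conv V y -> forall i, Rabs (y i) <= B.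
Proof.
  destruct (verts_bound V) as [C [HC H]]. exists (C + 1); split; [lra|].
  intros y [w [_ [n [s e]]]] i. rewrite e. change (Rabs (comb w V i) <= C + 1).
  pose proof (comb_bound C w V i HC H n). rewrite s in H0. lra.
Qed.

Lemma conv_nil {d} (y : pt d) : ~ in_conv [] y.
Proof. intros [w [l [_ [s _]]]]. destruct w; simpl in *; [lra|discriminate]. Qed.

Lemma conv_nonempty {d} (V : list (pt d)) : V <> [] -> exists y, in_conv V y.
Proof.
  destruct V as [|v V]; [tauto|]. intros _. exists v.
  exists (1 :: repeat 0 (length V)). simpl. split; [rewrite repeat_length; auto|].
  split. constructor; [lra|]. apply Forall_forall; intros x Hx; apply repeat_spec in Hx; lra.
  split. replace (Rsum (repeat 0 (length V))) with 0. ring.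
  induction (length V); simpl; auto; rewrite <- IHn; ring.
  intro i. change (v i = comb (1 :: repeat 0 (length V)) (v :: V) i).
  rewrite comb_cons, comb_repeat0; ring.
Qed.

Lemma conv_single {d} (v y : pt d) : in_conv [v] y <-> forall i, y i = v i.
Proof.
  split.
  - intros [w [l [n [s e]]]] i. destruct w as [|a [|b w]]; simpl in l; try lia.
    simpl in s. rewrite e. change (a * v i + comb [] (@nil (pt d)) i = v i).
    rewrite comb_nilr. replace a with 1 by lra. ring.
  - intro h. exists [1]. split; [reflexivity|]. split; [constructor; [lra|constructor]|].
    split; [simpl; ring|]. intro i. change (y i = comb [1] [v] i). rewrite comb_cons, comb_nilr, h; ring.
Qed.

Lemma conv_cons_iff {d} (v : pt d) V z : V <> [] ->
  (in_conv (v :: V) z <-> exists lam y, 0 <= lam <= 1 /\ in_conv V y /\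
     forall i, z i = lam * v i + (1 - lam) * y i).
Proof.
  intro HV. split.
  - intros [w [l [n [s e]]]]. destruct w as [|a w]; simpl in l; try lia.
    inversion n; subst. simpl in s. pose proof (Rsum_nonneg _ H2).
    destruct (Req_dec_T a 1) as [Ha|Ha].
    + destruct (conv_nonempty V HV) as [y Hy]. exists 1, y. split; [lra|]. split; auto.
      intro i. rewrite e. change (comb (a :: w) (v :: V) i = 1 * v i + (1 - 1) * y i).
      rewrite comb_cons, comb_zero_sum by (auto; lra). subst; ring.
    + exists a, (fun i => comb (map (Rmult (/ (1 - a))) w) V i). split; [lra|]. split.
      * exists (map (Rmult (/ (1 - a))) w). split; [rewrite length_map; lia|].
        split. apply Forall_forall; intros x Hx. apply in_map_iff in Hx as [u [<- Hu]].
        rewrite Forall_forall in H2. pose proof (H2 u Hu).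
        assert (0 < / (1 - a)) by (apply Rinv_0_lt_compat; lra). nra.
        split. rewrite Rsum_scale. replace (Rsum w) with (1 - a) by lra. field; lra.
        intro i; reflexivity.
      * intro i. rewrite e. change (comb (a :: w) (v :: V) i = a * v i + (1 - a) * comb (map (Rmult (/ (1 - a))) w) V i).
        rewrite comb_cons, comb_scale. field. lra.
  - intros [lam [y [hl [[w [l [n [s e]]]] hz]]]].
    exists (lam :: map (Rmult (1 - lam)) w). simpl. split; [rewrite length_map; lia|].
    split. constructor; [lra|]. apply Forall_forall; intros x Hx. apply in_map_iff in Hx as [u [<- Hu]].
    rewrite Forall_forall in n. pose proof (n u Hu). nra.
    split. rewrite Rsum_scale, s. ring.
    intro i. change (z i = comb (lam :: map (Rmult (1 - lam)) w) (v :: V) i).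
    rewrite comb_cons, comb_scale, hz, e. reflexivity.
Qed.
Definition closed_pt {d} (S : pt d -> Prop) := forall z : pt d,
  (forall eps, 0 < eps -> exists y, S y /\ forall i, Rabs (y i - z i) < eps) -> S z.

Lemma abs_diff_le (a b A B : R) : Rabs a <= A -> Rabs b <= B -> Rabs (a - b) <= A + B.
Proof.
  intros h1 h2. unfold Rminus. pose proof (Rabs_triang a (- b)). rewrite Rabs_Ropp in H. lra.
Qed.

Lemma conv_closed {d} (V : list (pt d)) : closed_pt (in_conv V).
Proof.
  induction V as [|v W IH]; intros z Hz.
  - destruct (Hz 1 Rlt_0_1) as [y [Hy _]]. exfalso; exact (conv_nil y Hy).
  - destruct W as [|w0 W0].
    + apply conv_single. intro i. symmetry. apply approx_eq. intros e He.
      destruct (Hz e He) as [y [Hy Hyz]]. rewrite conv_single in Hy. rewrite <- Hy. auto.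
    + set (W := w0 :: W0) in *. assert (HW : W <> []) by discriminate.
      set (Apx := fun lam eps => exists y, in_conv W y /\
                   forall i, Rabs (lam * v i + (1 - lam) * y i - z i) < eps).
      assert (Amono : forall lam e1 e2, Apx lam e1 -> e1 <= e2 -> Apx lam e2).
      { intros lam e1 e2 [y [Hy Hi]] h. exists y; split; auto. intro i; specialize (Hi i); lra. }
      assert (H0 : forall eps, 0 < eps -> exists lam, 0 <= lam <= 1 /\ Apx lam eps).
      { intros eps Heps. destruct (Hz eps Heps) as [y [Hy Hyz]].
        apply (conv_cons_iff v W y HW) in Hy as [lam [y' [hl [hy' he]]]].
        exists lam; split; auto. exists y'; split; auto. intro i; rewrite <- he; auto. }
      destruct (conv_bound W) as [B [HB HBW]].
      destruct (fin_bound d v) as [Bv [HBv HBv']].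
      set (C := B + Bv + 1). assert (HC : 0 < C) by (unfold C; lra).
      set (S := fun c => forall eps, 0 < eps -> exists lam, 0 <= lam /\ c <= lam <= 1 /\ Apx lam eps).
      assert (S0 : S 0). { intros eps Heps. destruct (H0 eps Heps) as [lam [h1 h2]]. exists lam; repeat split; try lra; auto. }
      assert (Sb : forall c, S c -> c <= 1).
      { intros c Hc. destruct (Hc 1 Rlt_0_1) as [lam [_ [h _]]]; lra. }
      destruct (completeness S) as [cs [Hub Hlub]].
      { exists 1. intros c Hc; auto. }
      { exists 0; auto. }
      assert (Hcs0 : 0 <= cs) by (apply Hub; auto).
      assert (Hcs1 : cs <= 1) by (apply Hlub; intros c Hc; auto).
      assert (Clus : forall eta eps, 0 < eta -> 0 < eps ->
                exists lam, 0 <= lam <= 1 /\ Rabs (lam - cs) <= eta /\ Apx lam eps).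
      { intros eta eps Heta Heps.
        destruct (classic (exists eps0, 0 < eps0 /\ ~ exists lam, cs + eta <= lam <= 1 /\ Apx lam eps0))
          as [[eps0 [He0 Hn0]]|Hn].
        2:{ exfalso. assert (S (cs + eta)).
            { intros e He. apply NNPP. intro hn. apply Hn. exists e; split; auto. intros [lam [h1 h2]]. apply hn. exists lam; repeat split; try lra; auto. }
            pose proof (Hub _ H). lra. }
        destruct (classic (exists c, S c /\ cs - eta < c)) as [[c [Hc Hc']]|Hn].
        2:{ exfalso. assert (cs <= cs - eta); [|lra]. apply Hlub. intros c Hc.
            apply Rnot_lt_le. intro hlt. apply Hn. exists c; auto. }
        destruct (Hc (Rmin eps eps0)) as [lam [hl0 [hl ha]]]. apply Rmin_pos; auto.
        exists lam. split; [lra|]. split.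
        - assert (lam < cs + eta).
          { apply Rnot_le_lt. intro hle. apply Hn0. exists lam. split; [lra|].
            apply (Amono _ _ _ ha). apply Rmin_r. }
          apply Rabs_le; lra.
        - apply (Amono _ _ _ ha). apply Rmin_l. }
      destruct (Req_dec_T cs 1) as [Hc1|Hc1].
      *
        assert (Hzv : forall i, v i = z i).
        { intro i. apply approx_eq. intros e He.
          destruct (Clus (e / (2 * C)) (e / 2)) as [lam [hl [hlc [y [Hy Hyi]]]]].
          apply Rdiv_lt_0_compat; lra. lra.
          specialize (Hyi i). pose proof (HBW y Hy i). pose proof (HBv' i).
          assert (Hid : v i - z i = (lam * v i + (1 - lam) * y i - z i) + (1 - lam) * (v i - y i)) by ring.
          rewrite Hid. eapply Rle_lt_trans. apply Rabs_triang.
          rewrite Rabs_mult. assert (Rabs (v i - y i) <= C) by (pose proof (abs_diff_le _ _ _ _ H1 H); unfold C; lra).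
          assert (Rabs (1 - lam) <= e / (2 * C)) by (rewrite Rabs_minus_sym; rewrite Hc1 in hlc; auto).
          assert (Rabs (1 - lam) * Rabs (v i - y i) <= e / (2*C) * C).
          { apply Rmult_le_compat; auto using Rabs_pos. }
          replace (e / (2 * C) * C) with (e / 2) in H4 by (field; lra). lra. }
        destruct (conv_nonempty W HW) as [y Hy].
        apply (conv_cons_iff v W z HW). exists 1, y. split; [lra|]. split; auto.
        intro i. rewrite <- Hzv. ring.
      * set (ys := fun i => (z i - cs * v i) / (1 - cs)).
        assert (Hys : in_conv W ys).
        { apply IH. intros e He.
          destruct (Clus (e * (1 - cs) / (2 * C)) (e * (1 - cs) / 2)) as [lam [hl [hlc [y [Hy Hyi]]]]].
          apply Rdiv_lt_0_compat; nra. nra.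
          exists y; split; auto. intro i.
          specialize (Hyi i). pose proof (HBW y Hy i). pose proof (HBv' i).
          assert (Hid : (1 - cs) * (y i - ys i) = (lam * v i + (1 - lam) * y i - z i) + (lam - cs) * (y i - v i))
            by (unfold ys; field; lra).
          assert (Rabs (y i - v i) <= C) by (pose proof (abs_diff_le _ _ _ _ H H1); unfold C; lra).
          assert (Rabs (lam - cs) * Rabs (y i - v i) <= e * (1 - cs) / (2 * C) * C).
          { apply Rmult_le_compat; auto using Rabs_pos. }
          replace (e * (1 - cs) / (2 * C) * C) with (e * (1 - cs) / 2) in H3 by (field; lra).
          assert (Rabs ((1 - cs) * (y i - ys i)) < e * (1 - cs)).
          { rewrite Hid. eapply Rle_lt_trans. apply Rabs_triang. rewrite Rabs_mult. lra. }
          rewrite Rabs_mult, (Rabs_right (1 - cs)) in H4 by lra.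
          apply (Rmult_lt_reg_l (1 - cs)); lra. }
        apply (conv_cons_iff v W z HW). exists cs, ys. split; [lra|]. split; auto.
        intro i. unfold ys. field. lra.
Qed.
Definition good {d} (P : pt d -> Prop) : Prop :=
  (forall x y, (forall i, x i = y i) -> P x -> P y) /\
  (forall y1 y2 a y, P y1 -> P y2 -> 0 <= a <= 1 ->
     (forall i, y i = a * y1 i + (1 - a) * y2 i) -> P y) /\
  closed_pt P /\
  (exists B, 0 < B /\ forall y, P y -> forall i, Rabs (y i) <= B).

Lemma polytope_good {d} (P : pt d -> Prop) : is_polytope P -> good P.
Proof.
  intros [V [HV HP]]. split; [|split; [|split]].
  - intros x y h. rewrite !HP. apply conv_ext; auto.
  - intros y1 y2 a y h1 h2 ha hy. apply HP. apply HP in h1. apply HP in h2. apply (conv_convex V y1 y2 a y); auto.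
  - intros z Hz. apply HP. apply conv_closed. intros e He. destruct (Hz e He) as [y [Hy Hi]].
    exists y; split; auto. apply HP; auto.
  - destruct (conv_bound V) as [B [HB H]]. exists B; split; auto. intros y Hy; apply H, HP, Hy.
Qed.

Definition T {d} (P : pt d -> Prop) (x : pt d) (t : R) : Prop := 0 < t /\ dil t P x.

Lemma dil_pos {d} (P : pt d -> Prop) x t : 0 < t -> (dil t P x <-> exists y, P y /\ forall i, x i = t * y i).
Proof.
  intro ht. unfold dil. split.
  - intros [[h _]|[_ h]]; [lra|auto].
  - intro h; right; split; auto; lra.
Qed.

Lemma T_convex {d} (P : pt d -> Prop) x t1 t t2 : good P -> T P x t1 -> T P x t2 -> t1 <= t <= t2 -> T P x t.
Proof.
  intros [Hext [Hcv _]] [h1 d1] [h2 d2] ht.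
  apply dil_pos in d1 as [y1 [Hy1 e1]]; auto. apply dil_pos in d2 as [y2 [Hy2 e2]]; auto.
  split; [lra|]. apply dil_pos; [lra|].
  destruct (Req_dec_T t1 t2) as [E|E].
  - subst t2. replace t with t1 by lra. exists y1; auto.
  - set (a := t1 * (t2 - t) / (t * (t2 - t1))).
    assert (ha : 0 <= a <= 1).
    { unfold a. split.
      - apply Rmult_le_pos. apply Rmult_le_pos; lra. left; apply Rinv_0_lt_compat; nra.
      - apply Rmult_le_reg_r with (t * (t2 - t1)). nra.
        unfold Rdiv. rewrite Rmult_assoc, Rinv_l by nra. nra. }
    exists (fun i => x i / t). split.
    + apply (Hcv y1 y2 a); auto. intro i.
      assert (y1 i = x i / t1) by (rewrite e1; field; lra).
      assert (y2 i = x i / t2) by (rewrite e2; field; lra).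
      rewrite H, H0. unfold a. field. repeat split; lra.
    + intro i. field. lra.
Qed.

Lemma T_closed {d} (P : pt d -> Prop) x e : good P -> 0 < e ->
  (forall eps, 0 < eps -> exists t, T P x t /\ Rabs (t - e) < eps) -> T P x e.
Proof.
  intros [Hext [Hcv [Hcl _]]] He H. split; auto. apply dil_pos; auto.
  exists (fun i => x i / e). split.
  2:{ intro i; field; lra. }
  destruct (fin_bound d x) as [Bx [HBx HBx']].
  apply Hcl. intros eps Heps.
  destruct (H (Rmin (e / 2) (eps * e * e / (2 * (Bx + 1))))) as [t [[ht dt] hte]].
  { apply Rmin_pos. lra. apply Rdiv_lt_0_compat. apply Rmult_lt_0_compat; [apply Rmult_lt_0_compat|]; lra. lra. }
  apply dil_pos in dt as [y [Hy ey]]; auto. exists y; split; auto. intro i.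
  pose proof (Rmin_l (e / 2) (eps * e * e / (2 * (Bx + 1)))).
  pose proof (Rmin_r (e / 2) (eps * e * e / (2 * (Bx + 1)))).
  assert (Ht2 : e / 2 < t) by (apply Rabs_def2 in hte; lra).
  assert (hid : (y i - x i / e) * (t * e) = x i * (e - t)) by (rewrite ey; field; lra).
  assert (hab : Rabs (y i - x i / e) * (t * e) = Rabs (x i) * Rabs (e - t)).
  { rewrite <- (Rabs_right (t * e)) by nra. rewrite <- !Rabs_mult. rewrite hid; auto. }
  assert (hb : Rabs (x i) * Rabs (e - t) <= (Bx + 1) * (eps * e * e / (2 * (Bx + 1)))).
  { apply Rmult_le_compat; auto using Rabs_pos. pose proof (HBx' i); lra.
    rewrite Rabs_minus_sym; lra. }
  replace ((Bx + 1) * (eps * e * e / (2 * (Bx + 1)))) with (eps * e * e / 2) in hb by (field; lra).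
  assert (hq : eps * e * e / 2 < eps * (t * e)).
  { assert (0 < eps * e) by (apply Rmult_lt_0_compat; lra).
    replace (eps * (t * e)) with (eps * e * t) by ring. nra. }
  assert (Rabs (y i - x i / e) * (t * e) < eps * (t * e)) by lra.
  apply Rmult_lt_reg_r in H2; auto. apply Rmult_lt_0_compat; lra.
Qed.

Lemma T_lower {d} (P : pt d -> Prop) x : good P -> ~ (forall i, x i = 0) ->
  exists m, 0 < m /\ forall t, T P x t -> m <= t.
Proof.
  intros [_ [_ [_ [B [HB HBd]]]]] Hx.
  destruct (not_all_ex_not _ _ Hx) as [j Hj].
  exists (Rabs (x j) / B). split. apply Rdiv_lt_0_compat; auto. apply Rabs_pos_lt; auto.
  intros t [ht dt]. apply dil_pos in dt as [y [Hy ey]]; auto.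
  pose proof (HBd y Hy j). rewrite ey, Rabs_mult, (Rabs_right t) by lra.
  apply Rmult_le_reg_r with B; auto. unfold Rdiv. rewrite Rmult_assoc, Rinv_l by lra.
  pose proof (Rabs_pos (y j)). nra.
Qed.

Lemma T_min {d} (P : pt d -> Prop) x t0 : good P -> ~ (forall i, x i = 0) -> T P x t0 ->
  exists a, T P x a /\ forall t, T P x t -> a <= t.
Proof.
  intros G Hx H0. destruct (T_lower P x G Hx) as [m [Hm Hlm]].
  destruct (completeness (fun u => forall t, T P x t -> u <= t)) as [a [Hub Hlub]].
  { exists t0. intros u Hu. apply Hu; auto. }
  { exists m; auto. }
  assert (Ham : m <= a) by (apply Hub; auto).
  assert (Hat : forall t, T P x t -> a <= t) by (intros t Ht; apply Hlub; intros u Hu; apply Hu; auto).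
  exists a; split; auto. apply T_closed; auto. lra.
  intros eps Heps. apply NNPP; intro hn.
  assert (a + eps <= a); [|lra]. apply Hub. intros t Ht. apply Rnot_lt_le. intro hlt.
  apply hn. exists t. split; auto. pose proof (Hat t Ht). apply Rabs_def1; lra.
Qed.

Lemma T_gap {d} (P : pt d -> Prop) x e : good P -> 0 < e -> ~ T P x e ->
  exists eps, 0 < eps /\ forall del, 0 < del <= eps -> ~ T P x (e - del).
Proof.
  intros G He Hn.
  destruct (classic (exists eps, 0 < eps /\ forall del, 0 < del <= eps -> ~ T P x (e - del))) as [h|h]; auto.
  exfalso. apply Hn. apply T_closed; auto. intros eps Heps.
  destruct (classic (exists del, 0 < del <= eps / 2 /\ T P x (e - del))) as [[del [hd ht]]|h2].
  - exists (e - del); split; auto. apply Rabs_def1; lra.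
  - exfalso. apply h. exists (eps / 2). split; [lra|]. intros del hd ht. apply h2. exists del; auto.
Qed.

Lemma T_zero {d} (P : pt d -> Prop) x t : good P -> (forall i, x i = 0) -> 0 < t ->
  (T P x t <-> P (fun _ => 0)).
Proof.
  intros [Hext _] Hx ht. unfold T. rewrite dil_pos by auto. split.
  - intros [_ [y [Hy ey]]]. apply (Hext y); auto. intro i. specialize (ey i). rewrite Hx in ey.
    destruct (Rmult_integral _ _ (eq_sym ey)); lra.
  - intro h. split; auto. exists (fun _ => 0); split; auto. intro i; rewrite Hx; ring.
Qed.

Lemma ppyr_char {d} (P : pt d -> Prop) x s : 0 < s ->
  (dil s (ppyr P) x <-> (forall i, x i = 0) \/ exists t, T P x t /\ t <= s).
Proof.
  intro hs. rewrite dil_pos by auto. split.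
  - intros [y [[lam [hl dl]] ey]]. destruct dl as [[hl0 hy]|[hl0 [z [Hz ez]]]].
    + left. intro i. rewrite ey, hy. ring.
    + right. exists (s * lam). split. split. destruct hl; nra. apply dil_pos. destruct hl; nra.
      exists z; split; auto. intro i. rewrite ey, ez. ring. nra.
  - intros [h|[t [[ht dt] hts]]].
    + exists (fun _ => 0). split. exists 0. split; [lra|]. left; auto.
      intro i; rewrite h; ring.
    + apply dil_pos in dt as [z [Hz ez]]; auto.
      exists (fun i => (t / s) * z i). split.
      * exists (t / s). split. split. apply Rlt_le, Rdiv_lt_0_compat; auto.
        apply Rmult_le_reg_r with s; auto. unfold Rdiv; rewrite Rmult_assoc, Rinv_l; lra.
        right. split. apply Rgt_not_eq, Rdiv_lt_0_compat; auto. exists z; auto.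
      * intro i. rewrite ez. field. lra.
Qed.

Lemma dil_bound {d} (P : pt d -> Prop) B x t s : (forall y, P y -> forall i, Rabs (y i) <= B) ->
  0 <= B -> 0 <= t <= s -> dil t P x -> forall i, Rabs (x i) <= s * B.
Proof.
  intros HB HB0 ht [[_ h]|[h [y [Hy ey]]]] i.
  - rewrite h, Rabs_R0. nra.
  - rewrite ey, Rabs_mult, Rabs_right by lra. pose proof (HB y Hy i). pose proof (Rabs_pos (y i)). nra.
Qed.
Definition zrange (K : nat) : list Z :=
  map (fun k => (Z.of_nat k - Z.of_nat K)%Z) (seq 0 (2 * K + 1)).
Lemma in_zrange K a : (- Z.of_nat K <= a <= Z.of_nat K)%Z -> In a (zrange K).
Proof.
  intro h. apply in_map_iff. exists (Z.to_nat (a + Z.of_nat K)). split.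
  rewrite Z2Nat.id; lia. apply in_seq. lia.
Qed.
Fixpoint boxl (n K : nat) : list (list Z) :=
  match n with
  | O => [[]]
  | S n => flat_map (fun z => map (fun a => a :: z) (zrange K)) (boxl n K)
  end.
Lemma boxl_len n K z : In z (boxl n K) -> length z = n.
Proof.
  revert z; induction n; simpl; intros z H. destruct H as [<-|[]]; auto.
  apply in_flat_map in H as [w [Hw Hz]]. apply in_map_iff in Hz as [a [<- _]].
  simpl; rewrite (IHn w Hw); auto.
Qed.
Lemma boxl_in K z : (forall k, (k < length z)%nat -> (Z.abs (nth k z 0%Z) <= Z.of_nat K)%Z) ->
  In z (boxl (length z) K).
Proof.
  induction z as [|a z IH]; simpl; intro H; auto.
  apply in_flat_map. exists z. split.
  - apply IH. intros k hk. apply (H (S k)). lia.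
  - apply in_map_iff. exists a. split; auto. apply in_zrange. specialize (H 0%nat ltac:(lia)). simpl in H. lia.
Qed.
Definition Xbox d K := nodup (list_eq_dec Z.eq_dec) (boxl d K).
Lemma Xbox_nodup d K : NoDup (Xbox d K).
Proof. apply NoDup_nodup. Qed.
Lemma Xbox_len d K z : In z (Xbox d K) -> length z = d.
Proof. unfold Xbox; rewrite nodup_In. apply boxl_len. Qed.

Lemma box_cover d K (S : pt d -> Prop) : (forall x, S x -> forall i, Rabs (x i) <= INR K) ->
  forall z, length z = d -> S (embed d z) -> In z (Xbox d K).
Proof.
  intros H z Hl Hs. unfold Xbox; rewrite nodup_In. rewrite <- Hl. apply boxl_in.
  intros k hk. rewrite Hl in hk. pose proof (H _ Hs (Fin.of_nat_lt hk)) as h.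
  unfold embed in h. rewrite Fin.to_nat_of_nat in h. simpl in h.
  rewrite Rabs_Zabs, INR_IZR_INZ in h. apply le_IZR in h. exact h.
Qed.

Lemma LC {d} (S : pt d -> Prop) (Xb : list (list Z)) n : NoDup Xb -> (forall z, In z Xb -> length z = d) ->
  (forall z, length z = d -> S (embed d z) -> In z Xb) ->
  (lattice_count S n <-> n = length (filter (fun z => decb (S (embed d z))) Xb)).
Proof.
  intros ND HL HC.
  assert (Hmem : forall z, In z (filter (fun z => decb (S (embed d z))) Xb) <-> is_lattice_pt_of S z).
  { intro z. rewrite filter_In. unfold is_lattice_pt_of, decb. split.
    - intros [h1 h2]. destruct (excluded_middle_informative (S (embed d z))); [|discriminate]. auto.
    - intros [h1 h2]. split; auto. destruct (excluded_middle_informative (S (embed d z))); tauto. }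
  split.
  - intros [l [Hnd [Hl Hlen]]]. subst n.
    apply Nat.le_antisymm; apply NoDup_incl_length; auto using NoDup_filter.
    intros z Hz; apply Hmem, Hl, Hz. intros z Hz; apply Hl, Hmem, Hz.
  - intros ->. exists (filter (fun z => decb (S (embed d z))) Xb). split; [apply NoDup_filter; auto|].
    split; [intro z; rewrite Hmem; tauto|reflexivity].
Qed.

Lemma lattice_count_ext {d} (S1 S2 : pt d -> Prop) n : (forall x, S1 x <-> S2 x) ->
  (lattice_count S1 n <-> lattice_count S2 n).
Proof.
  intro h. unfold lattice_count, is_lattice_pt_of. split; intros [l [a [b c]]]; exists l; split; auto;
  split; auto; intro z; rewrite b; rewrite h; tauto.
Qed.
Lemma sum_jumps (Tt : R -> Prop) (E : list R) (del s : R) :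
  NoDup E -> 0 < del -> (forall e, In e E -> del < e <= s) ->
  (forall e e', In e E -> In e' E -> e <> e' -> del < Rabs (e - e')) ->
  (forall e, In e E -> ~ Tt e -> ~ Tt (e - del)) ->
  (forall t1 t t2, Tt t1 -> Tt t2 -> t1 <= t <= t2 -> Tt t) ->
  (forall t, Tt t -> exists a, Tt a /\ forall t', Tt t' -> a <= t') ->
  (forall a, Tt a -> (forall t, Tt t -> a <= t) -> a <= s -> In a E) ->
  zs E (fun e => (ind (Tt e) - ind (Tt (e - del)%R))%Z) = ind (exists t, Tt t /\ t <= s).
Proof.
  intros hND hd hE hgap hjump hcv hmin hcov.
  destruct (classic (exists t, Tt t /\ t <= s)) as [[t [Ht Hts]]|hn].
  - rewrite (ind_T _ (ex_intro _ t (conj Ht Hts))).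
    destruct (hmin t Ht) as [a [Ha Hamin]].
    assert (HaE : In a E) by (apply hcov; auto; pose proof (Hamin t Ht); lra).
    rewrite <- (zs_ind_eq E a hND HaE). apply zs_ext. intros e He.
    destruct (classic (Tt e)) as [Te|Te].
    + rewrite (ind_T _ Te). destruct (Req_dec_T e a) as [Eq|Neq].
      * subst e. rewrite (ind_T (a = a) eq_refl). rewrite ind_F. lia.
        intro h. pose proof (Hamin _ h). lra.
      * rewrite (ind_F (e = a) Neq). rewrite ind_T. lia.
        pose proof (Hamin e Te). pose proof (hgap e a He HaE Neq).
        apply (hcv a (e - del) e); auto.         assert (a < e) by lra. rewrite Rabs_right in H0 by lra. lra.
    + rewrite !ind_F; auto. intro; subst; auto.
  - rewrite (ind_F _ hn). apply zs_zero. intros e He.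
    assert (~ Tt e) by (intro h; apply hn; exists e; split; auto; apply hE; auto).
    rewrite !ind_F; auto.
Qed.

Lemma collect {A} (l : list A) (G : A -> R -> Prop) :
  (forall a r r', G a r -> G a r' -> r = r') ->
  exists E, (forall a r, In a l -> G a r -> In r E) /\ (forall r, In r E -> exists a, G a r).
Proof.
  intro hu. induction l as [|a l IH].
  - exists []; split; [intros; contradiction| intros; contradiction].
  - destruct IH as [E [H1 H2]].
    destruct (classic (exists r, G a r)) as [[r Hr]|hn].
    + exists (r :: E). split.
      * intros b r' [<-|Hb] Hg. left; apply (hu a); auto. right; apply (H1 b); auto.
      * intros r' [<-|Hr']; eauto.
    + exists E. split; auto. intros b r' [<-|Hb] Hg. exfalso; eauto. eauto.
Qed.

Lemma perx {d} (P : pt d -> Prop) (X : pt d) (E : list R) (del s : R) :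
  good P -> 0 < s -> 0 < del -> NoDup E -> (forall e, In e E -> del < e <= s) ->
  (forall e e', In e E -> In e' E -> e <> e' -> del < Rabs (e - e')) ->
  (forall e, In e E -> ~ T P X e -> ~ T P X (e - del)) ->
  (forall a, ~ (forall i, X i = 0) -> T P X a -> (forall t, T P X t -> a <= t) -> a <= s -> In a E) ->
  ind (dil s (ppyr P) X) =
    (ind (forall i, X i = 0%R) + zs E (fun e => ind (dil e P X) - ind (dil (e - del) P X)))%Z.
Proof.
  intros G hs hd hND hE hgap hjump hcov.
  rewrite (zs_ext _ _ (fun e => (ind (T P X e) - ind (T P X (e - del)%R))%Z)).
  2:{ intros e He. pose proof (hE e He). f_equal; apply ind_iff; unfold T; split; try tauto; intros; split; auto; lra. }
  destruct (classic (forall i, X i = 0)) as [Z0|Z0].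
  - rewrite !ind_T; auto. rewrite zs_zero. lia.
    intros e He. pose proof (hE e He). rewrite (ind_iff (T P X e) (P (fun _ => 0))).
    rewrite (ind_iff (T P X (e - del)) (P (fun _ => 0))). lia.
    apply T_zero; auto; lra. apply T_zero; auto; lra.
    apply ppyr_char; auto.
  - rewrite (ind_F _ Z0). rewrite (ind_iff _ _ (ppyr_char P X s hs)).
    rewrite sum_jumps with (s := s); auto.
    + apply ind_iff. split; [intros [h|h]; tauto| auto].
    + intros t1 t t2 h1 h2 h. apply (T_convex P X t1 t t2); auto.
    + intros t Ht. apply (T_min P X t); auto.
Qed.

Lemma total {d} (P : pt d -> Prop) (Xb : list (list Z)) (E : list R) (del s : R) :
  (forall z, In z Xb -> ind (dil s (ppyr P) (embed d z)) =
     (ind (forall i, embed d z i = 0%R) +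
      zs E (fun e => ind (dil e P (embed d z)) - ind (dil (e - del)%R P (embed d z))))%Z) ->
  zs Xb (fun z => ind (dil s (ppyr P) (embed d z))) =
    (zs Xb (fun z => ind (forall i, embed d z i = 0%R)) +
     zs E (fun e => zs Xb (fun z => ind (dil e P (embed d z))) -
                    zs Xb (fun z => ind (dil (e - del)%R P (embed d z)))))%Z.
Proof.
  intro h. rewrite (zs_ext _ _ _ h). rewrite zs_plus. f_equal.
  rewrite zs_swap. apply zs_ext. intros e _. apply zs_minus.
Qed.
Theorem lemma2p1 (d : nat) (P Q : pt d -> Prop) :
  is_polytope P -> is_polytope Q ->
  (forall s : R, 0 <= s -> forall n : nat, Lp P s n <-> Lp Q s n) ->
  forall s : R, 0 <= s -> forall n : nat, Lp (ppyr P) s n <-> Lp (ppyr Q) s n.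
Proof.
  intros HPp HQp H s Hs n.
  pose proof (polytope_good P HPp) as GP. pose proof (polytope_good Q HQp) as GQ.
  destruct (Req_dec_T s 0) as [Hs0|Hs0].
  { subst s. unfold Lp. apply lattice_count_ext. intro x. unfold dil.
    split; intros [[_ h]|[h _]]; try (left; split; auto; fail); exfalso; apply h; auto. }
  assert (hs : 0 < s) by lra.
  pose proof GP as [_ [_ [_ [BP [HBP HBPb]]]]].
  pose proof GQ as [_ [_ [_ [BQ [HBQ HBQb]]]]].
  destruct (INR_unbounded (s * (BP + BQ))) as [K HK].
  pose proof (pos_INR K) as HK0.
  set (Xb := Xbox d K).
  assert (covP : forall t, 0 <= t <= s -> forall z, length z = d -> dil t P (embed d z) -> In z Xb).
  { intros t ht. apply box_cover. intros x hx i.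
    pose proof (dil_bound P BP x t s HBPb (Rlt_le _ _ HBP) ht hx i). nra. }
  assert (covQ : forall t, 0 <= t <= s -> forall z, length z = d -> dil t Q (embed d z) -> In z Xb).
  { intros t ht. apply box_cover. intros x hx i.
    pose proof (dil_bound Q BQ x t s HBQb (Rlt_le _ _ HBQ) ht hx i). nra. }
  assert (covPP : forall z, length z = d -> dil s (ppyr P) (embed d z) -> In z Xb).
  { apply box_cover. intros x hx i. apply ppyr_char in hx as [h|[t [[ht dt] hts]]]; auto.
    rewrite h, Rabs_R0; lra.
    pose proof (dil_bound P BP x t s HBPb (Rlt_le _ _ HBP) (conj (Rlt_le _ _ ht) hts) dt i). nra. }
  assert (covQQ : forall z, length z = d -> dil s (ppyr Q) (embed d z) -> In z Xb).
  { apply box_cover. intros x hx i. apply ppyr_char in hx as [h|[t [[ht dt] hts]]]; auto.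
    rewrite h, Rabs_R0; lra.
    pose proof (dil_bound Q BQ x t s HBQb (Rlt_le _ _ HBQ) (conj (Rlt_le _ _ ht) hts) dt i). nra. }
  set (cnt := fun S : pt d -> Prop => length (filter (fun z => decb (S (embed d z))) Xb)).
  assert (LCX : forall S m, (forall z, length z = d -> S (embed d z) -> In z Xb) ->
             (lattice_count S m <-> m = cnt S)).
  { intros S m hc. apply LC; auto. apply Xbox_nodup. apply Xbox_len. }
  assert (eqPQ : forall t, 0 < t <= s -> cnt (dil t P) = cnt (dil t Q)).
  { intros t ht. assert (ht' : 0 <= t <= s) by lra.
    specialize (H t (proj1 ht') (cnt (dil t P))). unfold Lp in H.
    rewrite (LCX _ _ (covP t ht')), (LCX _ _ (covQ t ht')) in H. apply H; reflexivity. }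
  unfold Lp. rewrite (LCX _ n covPP), (LCX _ n covQQ).
  enough (cnt (dil s (ppyr P)) = cnt (dil s (ppyr Q))) as Heq by (rewrite Heq; tauto).
  set (GPm := fun z r => ~ (forall i, embed d z i = 0) /\ T P (embed d z) r /\
                          (forall t, T P (embed d z) t -> r <= t) /\ r <= s).
  set (GQm := fun z r => ~ (forall i, embed d z i = 0) /\ T Q (embed d z) r /\
                          (forall t, T Q (embed d z) t -> r <= t) /\ r <= s).
  destruct (collect Xb GPm) as [EP [HEP1 HEP2]].
  { intros z r r' [_ [h1 [h2 _]]] [_ [h1' [h2' _]]]. apply Rle_antisym; auto. }
  destruct (collect Xb GQm) as [EQ [HEQ1 HEQ2]].
  { intros z r r' [_ [h1 [h2 _]]] [_ [h1' [h2' _]]]. apply Rle_antisym; auto. }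
  set (E := nodup Req_dec_T (EP ++ EQ)).
  assert (HEnd : NoDup E) by apply NoDup_nodup.
  assert (HEpos : forall e, In e E -> 0 < e <= s).
  { intros e He. unfold E in He; rewrite nodup_In in He. apply in_app_or in He as [He|He].
    - destruct (HEP2 e He) as [z [_ [[h _] [_ h']]]]. lra.
    - destruct (HEQ2 e He) as [z [_ [[h _] [_ h']]]]. lra. }
  destruct (exists_small E (fun e del => del < e)) as [d1 [Hd1 Hd1']].
  { intros e He. exists (e / 2). pose proof (HEpos e He). split; [lra|]. intros; lra. }
  destruct (exists_small (list_prod E E)
     (fun p del => fst p <> snd p -> del < Rabs (fst p - snd p))) as [d2 [Hd2 Hd2']].
  { intros [e e'] _. simpl. destruct (Req_dec_T e e') as [Eq|Neq].
    - exists 1; split; [lra|]; intros; contradiction.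
    - exists (Rabs (e - e') / 2). assert (0 < Rabs (e - e')) by (apply Rabs_pos_lt; lra).
      split; [lra|]. intros; lra. }
  destruct (exists_small (list_prod Xb E)
     (fun p del => (~ T P (embed d (fst p)) (snd p) -> ~ T P (embed d (fst p)) (snd p - del)) /\
                   (~ T Q (embed d (fst p)) (snd p) -> ~ T Q (embed d (fst p)) (snd p - del))))
     as [d3 [Hd3 Hd3']].
  { intros [z e] Hp. apply in_prod_iff in Hp as [_ He]. simpl. pose proof (HEpos e He) as He'.
    assert (gp : exists ep, 0 < ep /\ forall del, 0 < del <= ep ->
                 ~ T P (embed d z) e -> ~ T P (embed d z) (e - del)).
    { destruct (classic (T P (embed d z) e)) as [h|h].
      - exists 1; split; [lra|]; intros; contradiction.
      - destruct (T_gap P (embed d z) e GP (proj1 He') h) as [ep [hep hep']].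
        exists ep; split; auto. }
    assert (gq : exists ep, 0 < ep /\ forall del, 0 < del <= ep ->
                 ~ T Q (embed d z) e -> ~ T Q (embed d z) (e - del)).
    { destruct (classic (T Q (embed d z) e)) as [h|h].
      - exists 1; split; [lra|]; intros; contradiction.
      - destruct (T_gap Q (embed d z) e GQ (proj1 He') h) as [ep [hep hep']].
        exists ep; split; auto. }
    destruct gp as [ep [hep Hp']]; destruct gq as [eq [heq Hq']].
    exists (Rmin ep eq). split. apply Rmin_pos; auto. intros del hdel.
    pose proof (Rmin_l ep eq); pose proof (Rmin_r ep eq).
    split; [apply Hp'|apply Hq']; lra. }
  set (del := Rmin d1 (Rmin d2 d3)).
  assert (hdel : 0 < del) by (unfold del; repeat apply Rmin_pos; auto).
  assert (hd1 : del <= d1) by (unfold del; apply Rmin_l).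
  assert (hd2 : del <= d2) by (unfold del; eapply Rle_trans; [apply Rmin_r| apply Rmin_l]).
  assert (hd3 : del <= d3) by (unfold del; eapply Rle_trans; [apply Rmin_r| apply Rmin_r]).
  assert (hE : forall e, In e E -> del < e <= s).
  { intros e He. pose proof (HEpos e He). pose proof (Hd1' e He del (conj hdel hd1)). lra. }
  assert (hgap : forall e e', In e E -> In e' E -> e <> e' -> del < Rabs (e - e')).
  { intros e e' He He' hne. apply (Hd2' (e, e')); auto. apply in_prod; auto. }
  assert (hjP : forall z, In z Xb -> forall e, In e E -> ~ T P (embed d z) e -> ~ T P (embed d z) (e - del)).
  { intros z Hz e He. apply (Hd3' (z, e)); auto. apply in_prod; auto. }
  assert (hjQ : forall z, In z Xb -> forall e, In e E -> ~ T Q (embed d z) e -> ~ T Q (embed d z) (e - del)).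
  { intros z Hz e He. apply (Hd3' (z, e)); auto. apply in_prod; auto. }
  assert (hcP : forall z, In z Xb -> forall a, ~ (forall i, embed d z i = 0) -> T P (embed d z) a ->
            (forall t, T P (embed d z) t -> a <= t) -> a <= s -> In a E).
  { intros z Hz a h1 h2 h3 h4. unfold E; rewrite nodup_In. apply in_or_app; left.
    apply (HEP1 z); auto. unfold GPm; auto. }
  assert (hcQ : forall z, In z Xb -> forall a, ~ (forall i, embed d z i = 0) -> T Q (embed d z) a ->
            (forall t, T Q (embed d z) t -> a <= t) -> a <= s -> In a E).
  { intros z Hz a h1 h2 h3 h4. unfold E; rewrite nodup_In. apply in_or_app; right.
    apply (HEQ1 z); auto. unfold GQm; auto. }
  assert (TP := total P Xb E del s
     (fun z Hz => perx P (embed d z) E del s GP hs hdel HEnd hE hgap (hjP z Hz) (hcP z Hz))).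
  assert (TQ := total Q Xb E del s
     (fun z Hz => perx Q (embed d z) E del s GQ hs hdel HEnd hE hgap (hjQ z Hz) (hcQ z Hz))).
  assert (cZ : forall S, Z.of_nat (cnt S) = zs Xb (fun z => ind (S (embed d z)))).
  { intro S. unfold cnt. apply (length_filter_zs Xb (fun z => S (embed d z))). }
  apply Nat2Z.inj. rewrite (cZ (dil s (ppyr P))), (cZ (dil s (ppyr Q))), TP, TQ.
  f_equal. apply zs_ext. intros e He. pose proof (hE e He).
  rewrite <- (cZ (dil e P)), <- (cZ (dil (e - del) P)), <- (cZ (dil e Q)), <- (cZ (dil (e - del) Q)).
  rewrite (eqPQ e), (eqPQ (e - del)) by lra. reflexivity.
Qed.
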